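(* Let $\mathrm{E}$ be a law of the form $\mathrm{x}\simeq\mathrm{x}\diamond f(\mathrm{x},\mathrm{y},\mathrm{z})$, for some word $f$ in $\mathrm{x},\mathrm{y},\mathrm{z}$, which implies $\mathrm{x}\diamond\mathrm{y}\simeq(\mathrm{x}\diamond\mathrm{y})\diamond\mathrm{y}$. Two irreducible words $w,w'\in M_X$ satisfy $w\sim_{\mathrm{E}}w'$ if and only if either they are the same letter of $X$, or $w=w_1\diamond w_2$ and $w'=w_1'\diamond w_2'$ with $w_1\sim_{\mathrm{E}}w_1'$ and $w_2\sim_{\mathrm{E}}w_2'$.
   Context: $M_X$ is the set of words of the free magma on an alphabet $X$. $u\sim_{\mathrm{E}}u'$ means the law $u\simeq u'$ holds in every magma satisfying $\mathrm{E}$. For words $u,u'$, $u'\to_{\mathrm{E}}u$ means $u\sim_{\mathrm{E}}u''\diamond u'$ for some word $u''$ (equivalently, under the hypotheses, $u\sim_{\mathrm{E}}u\diamond u'$). A word is irreducible if it is not of the form $w_1\diamond w_2$ with $w_2\to_{\mathrm{E}}w_1$. *)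

(* Defs.v *)
Inductive word (X : Type) : Type :=
| Var : X -> word X
| Op : word X -> word X -> word X.
Arguments Var {X} _.
Arguments Op {X} _ _.

Fixpoint eval {X M : Type} (op : M -> M -> M) (v : X -> M) (w : word X) : M :=
  match w with
  | Var a => v a
  | Op w1 w2 => op (eval op v w1) (eval op v w2)
  end.

Inductive var3 : Type := vx | vy | vz.

Definition satisfiesE (f : word var3) (M : Type) (op : M -> M -> M) : Prop :=
  forall v : var3 -> M, v vx = op (v vx) (eval op v f).

Definition simE (f : word var3) {X : Type} (u u' : word X) : Prop :=
  forall (M : Type) (op : M -> M -> M), satisfiesE f M op ->
    forall v : X -> M, eval op v u = eval op v u'.

Definition arrowE (f : word var3) {X : Type} (u' u : word X) : Prop :=
  exists u'' : word X, simE f u (Op u'' u').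

Definition irreducible (f : word var3) {X : Type} (w : word X) : Prop :=
  ~ (exists w1 w2 : word X, w = Op w1 w2 /\ arrowE f w2 w1).

(* Main.v *)
Require Import Defs.
From Stdlib Require Import ClassicalEpsilon FunctionalExtensionality PropExtensionality ProofIrrelevance.

Section Model.
Variable f : word var3.
Variable X : Type.

Lemma simE_refl (u : word X) : simE f u u.
Proof. intros M op H v; reflexivity. Qed.
Lemma simE_sym (u u' : word X) : simE f u u' -> simE f u' u.
Proof. intros H M op HE v; symmetry; apply H; auto. Qed.
Lemma simE_trans (u u' u'' : word X) : simE f u u' -> simE f u' u'' -> simE f u u''.
Proof. intros H1 H2 M op HE v; rewrite (H1 M op HE v); apply H2; auto. Qed.
Lemma simE_op (a b a' b' : word X) : simE f a a' -> simE f b b' -> simE f (Op a b) (Op a' b').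
Proof. intros H1 H2 M op HE v; simpl; rewrite (H1 M op HE v), (H2 M op HE v); reflexivity. Qed.

Definition cls (w : word X) : word X -> Prop := fun u => simE f w u.

Lemma cls_eq (a b : word X) : cls a = cls b <-> simE f a b.
Proof.
  split.
  - intro H. assert (E := equal_f H b). unfold cls in E. rewrite E. apply simE_refl.
  - intro H. apply functional_extensionality; intro u. apply propositional_extensionality.
    unfold cls; split; intro K.
    + exact (simE_trans _ _ _ (simE_sym _ _ H) K).
    + exact (simE_trans _ _ _ H K).
Qed.

Definition opC (c1 c2 : word X -> Prop) : word X -> Prop :=
  fun u => exists w1 w2, c1 = cls w1 /\ c2 = cls w2 /\ simE f (Op w1 w2) u.

Lemma opC_cls (a b : word X) : opC (cls a) (cls b) = cls (Op a b).
Proof.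
  apply functional_extensionality; intro u. apply propositional_extensionality.
  unfold opC; split.
  - intros (w1 & w2 & H1 & H2 & H3). apply cls_eq in H1. apply cls_eq in H2.
    unfold cls. exact (simE_trans _ _ _ (simE_op _ _ _ _ H1 H2) H3).
  - intro H. exists a, b. auto.
Qed.

Inductive N0 := At (a : X) | Pr (c1 c2 : word X -> Prop).

Definition iota0 (n : N0) : word X -> Prop :=
  match n with At a => cls (Var a) | Pr c1 c2 => opC c1 c2 end.

Definition valid (n : N0) := exists w, iota0 n = cls w.
Definition N := {n : N0 | valid n}.

Definition op0 (n m : N0) : N0 :=
  if excluded_middle_informative (iota0 n = opC (iota0 n) (iota0 m)) then n
  else Pr (iota0 n) (iota0 m).

Lemma iota_op0 n m : iota0 (op0 n m) = opC (iota0 n) (iota0 m).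
Proof. unfold op0; destruct excluded_middle_informative; auto. Qed.

Lemma op0_valid n m : valid n -> valid m -> valid (op0 n m).
Proof.
  intros [a Ha] [b Hb]. exists (Op a b). rewrite iota_op0, Ha, Hb. apply opC_cls.
Qed.

Definition opN (n m : N) : N :=
  exist _ (op0 (proj1_sig n) (proj1_sig m)) (op0_valid _ _ (proj2_sig n) (proj2_sig m)).

Definition iota (n : N) := iota0 (proj1_sig n).

Lemma subst_eval {Y M : Type} (op : M -> M -> M) (v : X -> M) (r : Y -> word X) (w : word Y) :
  eval op v (eval Op r w) = eval op (fun y => eval op v (r y)) w.
Proof. induction w; simpl; congruence. Qed.

Lemma iota_eval {Y : Type} (v : Y -> N) (r : Y -> word X) :
  (forall y, iota (v y) = cls (r y)) -> forall w, iota (eval opN v w) = cls (eval Op r w).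
Proof.
  intros H w; induction w; simpl; auto.
  unfold iota in *; simpl. rewrite iota_op0, IHw1, IHw2. apply opC_cls.
Qed.

Lemma opN_fix (n m : N) : iota n = opC (iota n) (iota m) -> opN n m = n.
Proof.
  destruct n as [n p]; destruct m as [m q]; unfold iota, opN; simpl; intro H.
  generalize (op0_valid n m p q). unfold op0.
  destruct excluded_middle_informative as [e|e]; [|contradiction].
  intro v0. f_equal. apply proof_irrelevance.
Qed.

Lemma N_sat : satisfiesE f N opN.
Proof.
  intro v.
  set (r := fun y => proj1_sig (constructive_indefinite_description _ (proj2_sig (v y)))).
  assert (Hr : forall y, iota (v y) = cls (r y)).
  { intro y. unfold r. destruct constructive_indefinite_description; simpl. exact e. }
  symmetry. apply opN_fix.
  rewrite (iota_eval v r Hr f), Hr, opC_cls. apply cls_eq.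
  intros M op HE w. simpl. rewrite subst_eval.
  exact (HE (fun y => eval op w (r y))).
Qed.

Definition atomv (a : X) : N := exist _ (At a) (ex_intro _ (Var a) eq_refl).
Definition nf (w : word X) : N := eval opN atomv w.

Lemma eval_var (w : word X) : eval Op Var w = w.
Proof. induction w; simpl; congruence. Qed.

Lemma iota_nf w : iota (nf w) = cls w.
Proof.
  unfold nf. rewrite (iota_eval atomv Var (fun y => eq_refl) w). now rewrite eval_var.
Qed.

Lemma nf_op w1 w2 : irreducible f (Op w1 w2) -> proj1_sig (nf (Op w1 w2)) = Pr (cls w1) (cls w2).
Proof.
  intro Hirr. change (op0 (proj1_sig (nf w1)) (proj1_sig (nf w2)) = Pr (cls w1) (cls w2)).
  unfold op0. fold (iota (nf w1)) (iota (nf w2)). rewrite !iota_nf.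
  destruct excluded_middle_informative as [e|e]; auto.
  exfalso. apply Hirr. exists w1, w2. split; auto. exists w1.
  rewrite opC_cls in e. apply cls_eq in e. exact e.
Qed.

End Model.

Theorem mainTheorem12 (f : word var3)
  (hE : simE f (Op (Var vx) (Var vy)) (Op (Op (Var vx) (Var vy)) (Var vy)))
  (X : Type) (w w' : word X) :
  irreducible f w -> irreducible f w' ->
  (simE f w w' <->
     (exists a : X, w = Var a /\ w' = Var a) \/
     (exists w1 w2 w1' w2' : word X,
         w = Op w1 w2 /\ w' = Op w1' w2' /\ simE f w1 w1' /\ simE f w2 w2')).
Proof.
  intros Hw Hw'. split.
  - intro H. assert (E : nf f X w = nf f X w') by (apply H; apply N_sat).
    apply (f_equal (@proj1_sig _ _)) in E.
    destruct w as [a|w1 w2]; destruct w' as [b|w1' w2'].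
    + simpl in E. injection E as ->. left; eauto.
    + rewrite nf_op in E by auto. simpl in E. discriminate.
    + rewrite nf_op in E by auto. simpl in E. discriminate.
    + rewrite !nf_op in E by auto. injection E as E1 E2.
      right. exists w1, w2, w1', w2'. repeat split; apply cls_eq; auto.
  - intros [(a & -> & ->) | (w1 & w2 & w1' & w2' & -> & -> & H1 & H2)].
    + apply simE_refl.
    + apply simE_op; auto.
Qed.
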